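(* Let $(\alpha_j)_{j\ge1}$ be nonnegative with $\sum_j j\alpha_j=1$ and $\alpha_1<1$, and for $\omega\ge1$ let \[q_j^{(\omega)}=\frac{j\alpha_j}{\omega^{j-1}h_j(\omega)}\left(\frac{1-\sum_{i\ge1}\frac{1}{4^{i-1}}\binom{2i-1}{i-1}\frac{i\alpha_i}{\omega^{i-1}h_i(\omega)}}{4}\right)^{j-1},\qquad h_p(\omega)=\sum_{s=0}^{p-1}(4\omega)^{-s}\binom{2s}{s}.\] Then for every $j\ge1$, the function $\omega\mapsto q_j^{(\omega)}$ is nonincreasing on $[1,+\infty)$. Moreover, if $j\ge2$ and $\alpha_j>0$, this function is (strictly) decreasing.
   Context: ($\mathbf q^{(\omega)}$ is the unique weight sequence whose infinite Boltzmann planar map has root face half-degree law $(j\alpha_j)$ and hyperbolicity parameter $\omega$, but the claim only concerns the explicit formula above.) *)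

(* Defs.v *)
From Stdlib Require Import Reals.
From Coquelicot Require Import Coquelicot.
Open Scope R_scope.

Definition hfun (p : nat) (w : R) : R :=
  sum_n (fun s => / (4 * w) ^ s * Binomial.C (2 * s) s) (p - 1).

(* i-th term of the inner series; alpha is indexed from 1, the i = 0 term is 0 *)
Definition inner_term (alpha : nat -> R) (w : R) (i : nat) : R :=
  / 4 ^ (i - 1) * Binomial.C (2 * i - 1) (i - 1)
    * (INR i * alpha i / (w ^ (i - 1) * hfun i w)).

Definition inner_sum (alpha : nat -> R) (w : R) : R :=
  Series (inner_term alpha w).

Definition qfun (alpha : nat -> R) (j : nat) (w : R) : R :=
  INR j * alpha j / (w ^ (j - 1) * hfun j w)
    * ((1 - inner_sum alpha w) / 4) ^ (j - 1).

(* Main.v *)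
Require Import Defs.
From Stdlib Require Import Reals Lra Lia.
From Coquelicot Require Import Coquelicot.
Open Scope R_scope.

Definition bb (s : nat) : R := / 4 ^ s * Binomial.C (2 * s) s.

Lemma bb0 : bb 0 = 1.
Proof. unfold bb, Binomial.C. simpl. field. Qed.

Lemma bbS s : bb (S s) = bb s * (2 * INR s + 1) / (2 * INR s + 2).
Proof.
  unfold bb, Binomial.C.
  replace (2 * S s - S s)%nat with (S s) by lia.
  replace (2 * s - s)%nat with s by lia.
  replace (2 * S s)%nat with (S (S (2 * s))) by lia.
  rewrite !fact_simpl, !mult_INR, !S_INR, !mult_INR. simpl (INR 2).
  simpl pow.
  pose proof (INR_fact_neq_0 s). pose proof (INR_fact_neq_0 (2*s)).
  pose proof (pos_INR s).
  field. repeat split; try lra. apply pow_nonzero; lra.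
Qed.

Lemma bb_pos s : 0 < bb s.
Proof.
  induction s. rewrite bb0; lra.
  rewrite bbS. pose proof (pos_INR s).
  apply Rmult_lt_0_compat. apply Rmult_lt_0_compat; lra. apply Rinv_0_lt_compat; lra.
Qed.

Lemma c_eq n : / 4 ^ (S n - 1) * Binomial.C (2 * S n - 1) (S n - 1) = 2 * bb (S n).
Proof.
  unfold bb, Binomial.C.
  replace (S n - 1)%nat with n by lia.
  replace (2 * S n - 1 - n)%nat with (S n) by lia.
  replace (2 * S n - 1)%nat with (S (2 * n)) by lia.
  replace (2 * S n - S n)%nat with (S n) by lia.
  replace (2 * S n)%nat with (S (S (2 * n))) by lia.
  rewrite !fact_simpl, !mult_INR, !S_INR, !mult_INR. simpl (INR 2).
  simpl pow.
  pose proof (INR_fact_neq_0 n). pose proof (INR_fact_neq_0 (2*n)).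
  pose proof (pos_INR n).
  field. repeat split; try lra; apply pow_nonzero; lra.
Qed.

Fixpoint G (n : nat) (w : R) : R :=
  match n with O => 1 | S m => w * G m w + bb (S m) end.
Fixpoint dG (n : nat) (w : R) : R :=
  match n with O => 0 | S m => G m w + w * dG m w end.

Lemma is_derive_eq (f : R -> R) x l l' : is_derive f x l -> l = l' -> is_derive f x l'.
Proof. intros H ->; exact H. Qed.

Lemma G_deriv n w : is_derive (fun x => G n x) w (dG n w).
Proof.
  induction n; simpl.
  - apply (is_derive_const (K:=R_AbsRing) 1 w).
  - eapply is_derive_eq.
    + apply (is_derive_plus (K:=R_AbsRing) (fun x => x * G n x) (fun _ => bb (S n))).
      * apply (is_derive_mult (K:=R_AbsRing) (fun x => x) (fun x => G n x)).
        apply is_derive_id. exact IHn. intros; apply Rmult_comm.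
      * apply is_derive_const.
    + simpl. unfold plus, mult, one, zero; simpl. ring.
Qed.

Lemma sum_SnR (f : nat -> R) n : sum_n f (S n) = sum_n f n + f (S n).
Proof. rewrite !sum_n_Reals. reflexivity. Qed.

Lemma hfun_G n w : w <> 0 -> w ^ n * hfun (S n) w = G n w.
Proof.
  intro Hw. unfold hfun. replace (S n - 1)%nat with n by lia.
  induction n.
  - simpl. rewrite sum_O. unfold Binomial.C. simpl. field.
  - rewrite sum_SnR. simpl G.
    rewrite <- IHn.
    unfold bb. rewrite Rpow_mult_distr.
    simpl pow. field. repeat split; try apply pow_nonzero; lra.
Qed.

Lemma G1 n : G n 1 = 2 * (INR n + 1) * bb (S n).
Proof.
  induction n; simpl G.
  - rewrite bbS, bb0. simpl. field.
  - rewrite IHn. rewrite (bbS (S n)). rewrite S_INR.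
    pose proof (pos_INR n). field. lra.
Qed.

Lemma G_ge n w : 1 <= w -> G n 1 <= G n w.
Proof.
  intro Hw. induction n; simpl G. lra.
  assert (0 <= G n 1) by (rewrite G1; pose proof (pos_INR n); pose proof (bb_pos (S n)); nra).
  nra.
Qed.

Lemma G_lb n w : 1 <= w -> 2 * (INR n + 1) * bb (S n) <= G n w.
Proof. intro. rewrite <- G1. now apply G_ge. Qed.

Lemma G_pos n w : 1 <= w -> 0 < G n w.
Proof. intro. pose proof (G_lb n w H). pose proof (pos_INR n). pose proof (bb_pos (S n)). nra. Qed.

Definition Lf n w := (w + /2) * dG n w - INR n * G n w.

Lemma L_nonneg n w : 1 <= w -> 0 <= Lf n w.
Proof.
  intro Hw. induction n.
  - unfold Lf; simpl. lra.
  - assert (E : Lf (S n) w = w * Lf n w + G n w / 2 - (INR n + 1) * bb (S n)).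
    { unfold Lf. simpl G. simpl dG. rewrite S_INR. field. }
    rewrite E. pose proof (G_lb n w Hw). nra.
Qed.

Definition Kf n w := G n w ^ 2 - 2 * bb (S n) * G n w - 2 * bb (S n) * (w + /2) * dG n w.

Lemma K_rec n w : (2 * INR n + 4) * Kf (S n) w =
  (2 * INR n + 3) * w * Kf n w +
  ((G n w - (2 * INR n + 2) * bb (S n)) * (G n w + bb (S n))
   + G n w ^ 2 * (w - 1) * ((2 * INR n + 4) * w + 1) + 2 * bb (S n) * G n w * (w - 1)).
Proof.
  unfold Kf. simpl G. simpl dG. rewrite (bbS (S n)), S_INR.
  pose proof (pos_INR n). field. lra.
Qed.

Lemma K_nonneg n w : 1 <= w -> 0 <= Kf n w.
Proof.
  intro Hw. induction n.
  - unfold Kf; simpl. rewrite bbS, bb0. simpl. lra.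
  - pose proof (K_rec n w). pose proof (G_lb n w Hw). pose proof (pos_INR n).
    pose proof (bb_pos (S n)). pose proof (G_pos n w Hw).
    assert (0 <= (G n w - (2 * INR n + 2) * bb (S n)) * (G n w + bb (S n))) by nra.
    assert (0 <= G n w ^ 2 * (w - 1) * ((2 * INR n + 4) * w + 1)).
    { apply Rmult_le_pos. apply Rmult_le_pos. nra. lra. nra. }
    assert (0 <= 2 * bb (S n) * G n w * (w - 1)).
    { apply Rmult_le_pos. nra. lra. }
    assert (0 <= (2 * INR n + 3) * w * Kf n w).
    { apply Rmult_le_pos. nra. auto. }
    nra.
Qed.

Lemma K_pos n w : 1 < w -> 0 < Kf (S n) w.
Proof.
  intro Hw. pose proof (K_rec n w). pose proof (G_lb n w (Rlt_le _ _ Hw)). pose proof (pos_INR n).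
    pose proof (bb_pos (S n)). pose proof (G_pos n w (Rlt_le _ _ Hw)).
    pose proof (K_nonneg n w (Rlt_le _ _ Hw)).
    assert (0 <= (G n w - (2 * INR n + 2) * bb (S n)) * (G n w + bb (S n))) by nra.
    assert (0 <= G n w ^ 2 * (w - 1) * ((2 * INR n + 4) * w + 1)).
    { apply Rmult_le_pos. apply Rmult_le_pos. nra. lra. nra. }
    assert (0 < 2 * bb (S n) * G n w * (w - 1)).
    { apply Rmult_lt_0_compat. nra. lra. }
    assert (0 <= (2 * INR n + 3) * w * Kf n w).
    { apply Rmult_le_pos. nra. auto. }
    nra.
Qed.

Lemma decr_on (F dF : R -> R) :
  (forall x, 1 <= x -> is_derive F x (dF x)) -> (forall x, 1 <= x -> dF x <= 0) ->
  forall a b, 1 <= a -> a <= b -> F b <= F a.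
Proof.
  intros HD Hs a b Ha Hab.
  destruct (Rle_lt_or_eq_dec _ _ Hab) as [Hlt|<-]; [|lra].
  destruct (MVT_gen F a b dF) as [c [Hc Heq]].
  - intros x Hx. rewrite Rmin_left in Hx by lra. rewrite Rmax_right in Hx by lra.
    apply HD; lra.
  - intros x Hx. rewrite Rmin_left in Hx by lra. rewrite Rmax_right in Hx by lra.
    apply continuity_pt_filterlim. apply (ex_derive_continuous (K:=R_AbsRing) (V:=R_NormedModule)).
    eexists. apply HD; lra.
  - rewrite Rmin_left in Hc by lra. rewrite Rmax_right in Hc by lra.
    assert (dF c <= 0) by (apply Hs; lra). nra.
Qed.

Lemma sdecr_on (F dF : R -> R) :
  (forall x, 1 <= x -> is_derive F x (dF x)) -> (forall x, 1 <= x -> dF x <= 0) ->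
  (forall x, 1 < x -> dF x < 0) ->
  forall a b, 1 <= a -> a < b -> F b < F a.
Proof.
  intros HD Hs Hst a b Ha Hab.
  set (m := (a + b) / 2).
  assert (F m <= F a) by (apply (decr_on F dF); auto; unfold m; lra).
  destruct (MVT_gen F m b dF) as [c [Hc Heq]].
  - intros x Hx. rewrite Rmin_left in Hx by (unfold m; lra). rewrite Rmax_right in Hx by (unfold m; lra).
    apply HD; unfold m in *; lra.
  - intros x Hx. rewrite Rmin_left in Hx by (unfold m; lra). rewrite Rmax_right in Hx by (unfold m; lra).
    apply continuity_pt_filterlim. apply (ex_derive_continuous (K:=R_AbsRing) (V:=R_NormedModule)).
    eexists. apply HD; unfold m in *; lra.
  - rewrite Rmin_left in Hc by (unfold m; lra). rewrite Rmax_right in Hc by (unfold m; lra).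
    assert (dF c < 0) by (apply Hst; unfold m in *; lra).
    assert (0 < b - m) by (unfold m; lra). nra.
Qed.

Definition PhiN n w := (1 - 2 * bb (S n) / G n w) / (w + / 2).

Lemma PhiN_deriv n w : 1 <= w ->
  is_derive (PhiN n) w (- Kf n w / (G n w ^ 2 * (w + /2) ^ 2)).
Proof.
  intro Hw. pose proof (G_pos n w Hw).
  eapply is_derive_eq.
  - unfold PhiN. apply is_derive_div.
    + apply (is_derive_minus (K:=R_AbsRing) (fun _ => 1) (fun x => 2 * bb (S n) / G n x)).
      apply is_derive_const.
      unfold Rdiv. apply (is_derive_mult (K:=R_AbsRing) (fun _ => 2 * bb (S n)) (fun x => / G n x)).
      apply is_derive_const. apply is_derive_inv. apply G_deriv. lra.
      intros; apply Rmult_comm.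
    + apply (is_derive_plus (K:=R_AbsRing) (fun x => x) (fun _ => /2)).
      apply is_derive_id. apply is_derive_const.
    + lra.
  - unfold Kf, minus, plus, mult, opp, one, zero; simpl. field. lra.
Qed.

Lemma PhiN_decr n a b : 1 <= a -> a <= b -> PhiN n b <= PhiN n a.
Proof.
  apply (decr_on _ (fun w => - Kf n w / (G n w ^ 2 * (w + /2) ^ 2))).
  apply PhiN_deriv.
  intros x Hx. pose proof (K_nonneg n x Hx). pose proof (G_pos n x Hx).
  assert (0 < G n x ^ 2 * (x + /2) ^ 2) by (apply Rmult_lt_0_compat; apply pow_lt; lra).
  assert (0 <= Kf n x * / (G n x ^ 2 * (x + /2) ^ 2)) by
    (apply Rmult_le_pos; [auto| left; apply Rinv_0_lt_compat; auto]).
  unfold Rdiv. lra.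
Qed.

Lemma PhiN_sdecr n a b : 1 <= a -> a < b -> PhiN (S n) b < PhiN (S n) a.
Proof.
  apply (sdecr_on _ (fun w => - Kf (S n) w / (G (S n) w ^ 2 * (w + /2) ^ 2))).
  apply PhiN_deriv.
  intros x Hx. pose proof (K_nonneg (S n) x Hx). pose proof (G_pos (S n) x Hx).
  assert (0 < G (S n) x ^ 2 * (x + /2) ^ 2) by (apply Rmult_lt_0_compat; apply pow_lt; lra).
  assert (0 <= Kf (S n) x * / (G (S n) x ^ 2 * (x + /2) ^ 2)) by
    (apply Rmult_le_pos; [auto| left; apply Rinv_0_lt_compat; auto]).
  unfold Rdiv. lra.
  intros x Hx. pose proof (K_pos n x Hx). pose proof (G_pos (S n) x (Rlt_le _ _ Hx)).
  assert (0 < G (S n) x ^ 2 * (x + /2) ^ 2) by (apply Rmult_lt_0_compat; apply pow_lt; lra).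
  assert (0 < Kf (S n) x * / (G (S n) x ^ 2 * (x + /2) ^ 2)) by
    (apply Rmult_lt_0_compat; [auto| apply Rinv_0_lt_compat; auto]).
  unfold Rdiv. lra.
Qed.

Definition Rq n w := (w + /2) ^ n / G n w.

Lemma Rq_decr n a b : 1 <= a -> a <= b -> Rq n b <= Rq n a.
Proof.
  apply (decr_on _ (fun w => (INR n * 1 * (w + /2) ^ pred n * G n w - (w + /2) ^ n * dG n w) / G n w ^ 2)).
  - intros x Hx. pose proof (G_pos n x Hx). unfold Rq. apply is_derive_div.
    + apply (is_derive_pow (fun x => x + /2)).
      eapply is_derive_eq.
      apply (is_derive_plus (K:=R_AbsRing) (fun x => x) (fun _ => /2)).
      apply is_derive_id. apply is_derive_const.
      unfold plus, one, zero; simpl. ring.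
    + apply G_deriv.
    + lra.
  - intros x Hx. pose proof (G_pos n x Hx).
    assert (0 < G n x ^ 2) by (apply pow_lt; lra).
    assert (N : INR n * 1 * (x + / 2) ^ pred n * G n x - (x + / 2) ^ n * dG n x <= 0).
    { destruct n. simpl. lra.
      pose proof (L_nonneg (S n) x Hx). unfold Lf in *. simpl pred.
      replace ((x + / 2) ^ S n) with ((x + /2) * (x + /2) ^ n) by (simpl; ring).
      assert (0 < (x + /2) ^ n) by (apply pow_lt; lra).
      nra. }
    unfold Rdiv. assert (0 < / G n x ^ 2) by (apply Rinv_0_lt_compat; auto). nra.
Qed.

Lemma Rq_pos n w : 1 <= w -> 0 < Rq n w.
Proof. intro. unfold Rq. pose proof (G_pos n w H). apply Rdiv_lt_0_compat; auto. apply pow_lt; lra. Qed.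


Definition Bf (i : nat) (w : R) : R := match i with O => 0 | S n => 1 - 2 * bb (S n) / G n w end.
Definition Ph (i : nat) (w : R) : R := match i with O => 0 | S n => PhiN n w end.

Lemma Bf_bounds i w : 1 <= w -> 0 <= Bf i w <= 1.
Proof.
  intro Hw. destruct i as [|n]; simpl. lra.
  pose proof (G_lb n w Hw). pose proof (pos_INR n). pose proof (bb_pos (S n)).
  pose proof (G_pos n w Hw).
  assert (2 * bb (S n) <= G n w) by nra.
  assert (0 <= 2 * bb (S n) / G n w <= 1).
  { split. apply Rdiv_le_0_compat; lra.
    apply (Rmult_le_reg_r (G n w)); auto. unfold Rdiv. rewrite Rmult_assoc, Rinv_l; lra. }
  lra.
Qed.

Lemma Ph_Bf i w : 1 <= w -> Ph i w * (w + /2) = Bf i w.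
Proof. intro. destruct i; simpl. ring. unfold PhiN. pose proof (G_pos i w H). field. lra. Qed.

Lemma Ph_bounds i w : 1 <= w -> 0 <= Ph i w <= 1.
Proof.
  intro Hw. pose proof (Bf_bounds i w Hw). rewrite <- (Ph_Bf i w Hw) in H. nra.
Qed.

Lemma Ph_decr i a b : 1 <= a -> a <= b -> Ph i b <= Ph i a.
Proof. intros. destruct i; simpl. lra. now apply PhiN_decr. Qed.

Lemma pow_lt_strict x y n : 0 <= x < y -> x ^ S n < y ^ S n.
Proof.
  intros H. simpl. pose proof (pow_incr x y n (conj (proj1 H) (Rlt_le _ _ (proj2 H)))).
  assert (0 < y ^ n) by (apply pow_lt; lra). pose proof (pow_le x n (proj1 H)). nra.
Qed.

Lemma Series_nonneg (u : nat -> R) : (forall k, 0 <= u k) -> ex_series u -> 0 <= Series u.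
Proof.
  intros Hu Hex.
  assert (Series (fun _ => 0) <= Series u) by (apply Series_le; auto; intro; split; [lra|auto]).
  replace (Series (fun _ => 0)) with 0 in H; auto.
  rewrite (Series_ext _ (fun k => u k * 0)) by (intro; ring).
  rewrite Series_scal_r. ring.
Qed.

Lemma Series_ge_term (u : nat -> R) m : (forall k, 0 <= u k) -> ex_series u -> u m <= Series u.
Proof.
  intros Hu Hex. rewrite (Series_incr_n u (S m)) by (auto; lia). simpl pred.
  assert (0 <= Series (fun k => u (S m + k)%nat)).
  { apply Series_nonneg. auto. apply (ex_series_incr_n u (S m)) in Hex. exact Hex. }
  destruct m; simpl in *. lra.
  assert (0 <= sum_f_R0 u m) by (apply cond_pos_sum; auto). lra.
Qed.

Section Main.
Variable alpha : nat -> R.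
Hypothesis Hnn : forall j : nat, (1 <= j)%nat -> 0 <= alpha j.
Hypothesis Hsum : is_series (fun j : nat => INR j * alpha j) 1.

Let a i := INR i * alpha i.

Lemma a_nonneg i : 0 <= a i.
Proof. unfold a. destruct i. simpl; lra. apply Rmult_le_pos. apply pos_INR. apply Hnn; lia. Qed.

Lemma ex_a : ex_series a.
Proof. exists 1. exact Hsum. Qed.

Lemma inner_eq w i : 1 <= w -> inner_term alpha w i = a i - a i * Bf i w.
Proof.
  intro Hw. unfold inner_term, a. destruct i as [|n].
  - simpl. unfold Rdiv. rewrite !Rmult_0_l. ring.
  - rewrite c_eq. replace (S n - 1)%nat with n by lia.
    rewrite hfun_G by lra. simpl Bf. pose proof (G_pos n w Hw). field. lra.
Qed.

Lemma ex_aB w : 1 <= w -> ex_series (fun i => a i * Bf i w).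
Proof.
  intro Hw. apply (@ex_series_le R_AbsRing R_CompleteNormedModule _ a). 2: apply ex_a.
  intro i. change norm with Rabs. simpl. pose proof (a_nonneg i). pose proof (Bf_bounds i w Hw).
  rewrite Rabs_pos_eq by nra. nra.
Qed.

Definition Dser w := Series (fun i => a i * Ph i w).

Lemma ex_aP w : 1 <= w -> ex_series (fun i => a i * Ph i w).
Proof.
  intro Hw. apply (@ex_series_le R_AbsRing R_CompleteNormedModule _ a). 2: apply ex_a.
  intro i. change norm with Rabs. simpl. pose proof (a_nonneg i). pose proof (Ph_bounds i w Hw).
  rewrite Rabs_pos_eq by nra. nra.
Qed.

Lemma one_minus_S w : 1 <= w -> 1 - inner_sum alpha w = (w + /2) * Dser w.
Proof.
  intro Hw. unfold inner_sum.
  rewrite (Series_ext _ (fun i => a i - a i * Bf i w)) by (intro; apply inner_eq; auto).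
  rewrite Series_minus by (apply ex_a || apply ex_aB; auto).
  rewrite (is_series_unique a 1 Hsum).
  unfold Dser. rewrite Rmult_comm, <- Series_scal_r.
  rewrite (Series_ext (fun n => a n * Ph n w * (w + /2)) (fun i => a i * Bf i w)).
  ring. intro. rewrite <- (Ph_Bf n w Hw). ring.
Qed.

Lemma q_eq n w : 1 <= w ->
  qfun alpha (S n) w = a (S n) * (/4) ^ n * Rq n w * Dser w ^ n.
Proof.
  intro Hw. unfold qfun. replace (S n - 1)%nat with n by lia.
  rewrite hfun_G by lra. rewrite one_minus_S by auto.
  unfold Rdiv. rewrite !Rpow_mult_distr. unfold Rq, a. unfold Rdiv. ring.
Qed.

Lemma D_nonneg w : 1 <= w -> 0 <= Dser w.
Proof.
  intro. apply Series_nonneg. intro k. pose proof (a_nonneg k). pose proof (Ph_bounds k w H). nra.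
  apply ex_aP; auto.
Qed.

Lemma D_decr w1 w2 : 1 <= w1 -> w1 <= w2 -> Dser w2 <= Dser w1.
Proof.
  intros. apply Series_le. 2: apply ex_aP; auto.
  intro k. pose proof (a_nonneg k). pose proof (Ph_bounds k w2 ltac:(lra)).
  pose proof (Ph_decr k w1 w2 H H0). split; nra.
Qed.

Lemma D_sdecr n w1 w2 : 1 <= w1 -> w1 < w2 -> 0 < alpha (S (S n)) -> Dser w2 < Dser w1.
Proof.
  intros H1 H2 Ha.
  assert (E : Dser w1 - Dser w2 = Series (fun i => a i * Ph i w1 - a i * Ph i w2)).
  { unfold Dser. rewrite Series_minus; auto; apply ex_aP; lra. }
  assert (P : forall k, 0 <= a k * Ph k w1 - a k * Ph k w2).
  { intro k. pose proof (a_nonneg k). pose proof (Ph_decr k w1 w2 H1 (Rlt_le _ _ H2)). nra. }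
  pose proof (Series_ge_term _ (S (S n)) P).
  assert (ex_series (fun i => a i * Ph i w1 - a i * Ph i w2)).
  { apply (ex_series_minus (K:=R_AbsRing) (V:=R_NormedModule)); apply ex_aP; lra. }
  specialize (H H0).
  assert (0 < a (S (S n)) * Ph (S (S n)) w1 - a (S (S n)) * Ph (S (S n)) w2).
  { simpl Ph. pose proof (PhiN_sdecr n w1 w2 H1 H2).
    assert (0 < a (S (S n))) by (unfold a; apply Rmult_lt_0_compat; auto; apply lt_0_INR; lia).
    nra. }
  lra.
Qed.

End Main.

Theorem lemma15 (alpha : nat -> R)
  (Hnn : forall j : nat, (1 <= j)%nat -> 0 <= alpha j)
  (Hsum : is_series (fun j : nat => INR j * alpha j) 1)
  (H1 : alpha 1%nat < 1) :
  forall j : nat, (1 <= j)%nat ->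
    (forall w1 w2 : R, 1 <= w1 -> w1 <= w2 -> qfun alpha j w2 <= qfun alpha j w1) /\
    ((2 <= j)%nat -> 0 < alpha j ->
     forall w1 w2 : R, 1 <= w1 -> w1 < w2 -> qfun alpha j w2 < qfun alpha j w1).
Proof.
  intros j Hj. destruct j as [|n]; [lia|].
  assert (Ca : 0 <= INR (S n) * alpha (S n) * (/4) ^ n).
  { apply Rmult_le_pos. apply Rmult_le_pos. apply pos_INR. apply Hnn; lia.
    apply pow_le. lra. }
  split.
  - intros w1 w2 Hw1 Hw12.
    rewrite !(q_eq alpha Hnn Hsum) by lra.
    pose proof (Rq_decr n w1 w2 Hw1 Hw12). pose proof (Rq_pos n w2 ltac:(lra)).
    pose proof (D_decr alpha Hnn Hsum w1 w2 Hw1 Hw12) as Dd.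
    pose proof (D_nonneg alpha Hnn Hsum w2 ltac:(lra)) as Dn.
    assert (Dser alpha w2 ^ n <= Dser alpha w1 ^ n) by (apply pow_incr; lra).
    pose proof (pow_le (Dser alpha w2) n Dn).
    apply Rmult_le_compat; auto. apply Rmult_le_pos; lra.
    apply Rmult_le_compat_l; auto.
  - intros Hj2 Hapos w1 w2 Hw1 Hw12.
    destruct n as [|m]; [lia|].
    rewrite !(q_eq alpha Hnn Hsum) by lra.
    assert (Cp : 0 < INR (S (S m)) * alpha (S (S m)) * (/4) ^ S m).
    { apply Rmult_lt_0_compat. apply Rmult_lt_0_compat. apply lt_0_INR; lia. auto.
      apply pow_lt. lra. }
    pose proof (Rq_decr (S m) w1 w2 Hw1 (Rlt_le _ _ Hw12)). pose proof (Rq_pos (S m) w2 ltac:(lra)).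
    pose proof (D_sdecr alpha Hnn Hsum m w1 w2 Hw1 Hw12 Hapos) as Dd.
    pose proof (D_nonneg alpha Hnn Hsum w2 ltac:(lra)) as Dn.
    pose proof (pow_lt_strict (Dser alpha w2) (Dser alpha w1) m (conj Dn Dd)).
    pose proof (pow_le (Dser alpha w2) (S m) Dn).
    apply Rle_lt_trans with (INR (S (S m)) * alpha (S (S m)) * (/ 4) ^ S m * Rq (S m) w1 * Dser alpha w2 ^ S m).
    + apply Rmult_le_compat_r; auto. apply Rmult_le_compat_l; lra.
    + apply Rmult_lt_compat_l; auto. apply Rmult_lt_0_compat; auto. lra.
Qed.
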